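(* Let $G$ be a finite simple 3-regular circle graph that does not have two disjoint pairs of twin vertices, and suppose $G$ has the smallest number of vertices among all such graphs. If $G$ is not 2-connected, then $G$ has exactly two cutpoints (cut vertices).
   Context: A circle graph is a simple graph isomorphic to the interlacement graph of a double occurrence word (a sequence in which each of $n$ letters appears exactly twice; letters $a,b$ are adjacent iff they appear in order $abab$ or $baba$). Two distinct vertices $v_1,v_2$ are twins if $N(v_1)\setminus\{v_2\}=N(v_2)\setminus\{v_1\}$, where $N(v)$ is the open neighborhood. *)

(* Defs.v *)
From mathcomp Require Import all_boot.
Set Implicit Arguments. Unset Strict Implicit. Unset Printing Implicit Defensive.

Section Graphs.
Variable T : finType.
Implicit Types (e : rel T) (u v x y : T).

Definition simple_graph e := symmetric e /\ irreflexive e.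

Definition nbhd e v : {set T} := [set u | e v u].

Definition cubic e := forall v, #|nbhd e v| = 3.

Definition double_occurrence (w : seq T) := forall x, count_mem x w = 2.

Definition interlaced (w : seq T) a b :=
  let s := filter [pred z | (z == a) || (z == b)] w in
  (s == [:: a; b; a; b]) || (s == [:: b; a; b; a]).

(* e is (isomorphic to) the interlacement graph of a double occurrence word;
   letters of the word are identified with the vertices *)
Definition circle_graph e :=
  exists w : seq T, double_occurrence w /\
    forall a b, e a b = (a != b) && interlaced w a b.

Definition twins e v1 v2 :=
  (v1 != v2) && (nbhd e v1 :\ v2 == nbhd e v2 :\ v1).

Definition two_disjoint_twin_pairs e :=
  exists a b c d, [/\ twins e a b, twins e c d & [disjoint [set a; b] & [set c; d]]].

Definition good_graph e :=
  [/\ 0 < #|T|, simple_graph e, cubic e, circle_graph e & ~ two_disjoint_twin_pairs e].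

Definition delv e v : rel T := [rel x y | [&& e x y, x != v & y != v]].

(* v is a cutpoint: removing v increases the number of components, i.e. some
   two vertices other than v are connected in G but not in G - v *)
Definition cutpoint e v :=
  [exists x, exists y, [&& x != v, y != v, connect e x y & ~~ connect (delv e v) x y]].

Definition two_connected e :=
  [/\ 2 < #|T|, (forall x y, connect e x y) &
      forall v x y, x != v -> y != v -> connect (delv e v) x y].

End Graphs.

(* Main.v *)
Require Import Defs.
From mathcomp Require Import all_boot zify.
Set Implicit Arguments. Unset Strict Implicit. Unset Printing Implicit Defensive.


Lemma disj2E (T : finType) (a b c d : T) :
  [disjoint [set a; b] & [set c; d]] = [&& a != c, a != d, b != c & b != d].
Proof.
apply/idP/idP.
  move=> H; have Ha := disjointFr H (set21 a b); have Hb := disjointFr H (set22 a b).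
  rewrite !inE in Ha Hb; case/norP: (negbT Ha) => -> ->.
  by case/norP: (negbT Hb) => -> ->.
case/and4P=> H1 H2 H3 H4; rewrite -setI_eq0; apply/eqP/setP => z; rewrite !inE.
apply/negbTE/negP => /andP[/orP[]/eqP-> /orP[]/eqP E];
  by [move: H1; rewrite E eqxx|move: H2; rewrite E eqxx|move: H3; rewrite E eqxx|move: H4; rewrite E eqxx].
Qed.

Definition ilv (l : seq bool) :=
  (l == [:: true; false; true; false]) || (l == [:: false; true; false; true]).

Lemma ilv_size l : ilv l -> size l = 4.
Proof. by case/orP=> /eqP->. Qed.

Lemma ilv_rot (l1 l2 : seq bool) : ilv (l1 ++ l2) = ilv (l2 ++ l1).
Proof.
have [H|H] := eqVneq (size (l1 ++ l2)) 4.
  move: H; case: l1 => [|b1 [|b2 [|b3 [|b4 [|b5 l1]]]]];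
  case: l2 => [|c1 [|c2 [|c3 [|c4 [|c5 l2]]]]] //= _;
  rewrite ?cats0 //; repeat match goal with b : bool |- _ => case: b end; by [].
have Hs : size (l2 ++ l1) = size (l1 ++ l2) by rewrite !size_cat addnC.
by apply/idP/idP => /ilv_size E; move: H; rewrite ?E -?Hs ?E eqxx.
Qed.

Lemma ilv_nseq i m k : ilv (nseq i true ++ nseq m false ++ nseq k true) = false.
Proof.
by case: i => [|[|[|[|[|i]]]]]; case: m => [|[|[|[|[|m]]]]];
   case: k => [|[|[|[|[|k]]]]].
Qed.

Section Inter.
Variable T : eqType.
Definition pp (a b : T) := [pred z | (z == a) || (z == b)].

Lemma filter_pp_map (a b : T) s : a != b -> all (pp a b) s ->
  s = map (fun c : bool => if c then a else b) (map (pred1 a) s).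
Proof.
move=> ab; elim: s => //= z s IH /andP[pz /IH {1}->]; congr (_ :: _).
by case: eqP => // nza; move: pz; rewrite /= => /orP[/eqP za|/eqP->].
Qed.

Definition interl (s : seq T) a b :=
  let t := filter (pp a b) s in
  (t == [:: a; b; a; b]) || (t == [:: b; a; b; a]).

Lemma interl_ilv s a b : a != b -> interl s a b = ilv (map (pred1 a) (filter (pp a b) s)).
Proof.
move=> ab; rewrite /interl /ilv.
have al : all (pp a b) (filter (pp a b) s) by apply: filter_all.
set t := filter _ _ in al *.
have ba : (b == a) = false by rewrite eq_sym (negbTE ab).
apply/orP/orP => [[]/eqP->|[]/eqP E]; rewrite /= ?eqxx ?ba; [by left|by right| |];
  rewrite (filter_pp_map ab al) E ?eqxx //= ?eqxx; [by left|by right].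
Qed.
End Inter.

Lemma interlacedE (T : finType) (s : seq T) a b : interlaced s a b = interl s a b.
Proof. by []. Qed.


Section Inter2.
Variable T : eqType.
Implicit Types (s : seq T) (a b : T).

Lemma interl_feq s s' a b : filter (pp a b) s = filter (pp a b) s' -> interl s a b = interl s' a b.
Proof. by rewrite /interl => ->. Qed.

Lemma interl_rot s1 s2 a b : a != b -> interl (s1 ++ s2) a b = interl (s2 ++ s1) a b.
Proof. by move=> ab; rewrite !interl_ilv // !filter_cat !map_cat ilv_rot. Qed.

Lemma interl_sym s a b : interl s a b = interl s b a.
Proof.
rewrite /interl (@eq_filter _ (pp a b) (pp b a)); first by rewrite orbC.
by move=> z; rewrite /= orbC.
Qed.

Lemma interl_sub (P : pred T) s a b : P a -> P b -> interl (filter P s) a b = interl s a b.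
Proof.
move=> Pa Pb; apply: interl_feq; rewrite -filter_predI; apply: eq_filter => z /=.
by case: eqP => [->|_]; case: eqP => [->|_] //=; rewrite ?Pa ?Pb ?andbF.
Qed.
End Inter2.

Lemma interl_map (T1 T2 : eqType) (h : T1 -> T2) (s : seq T1) a b :
  injective h -> interl (map h s) (h a) (h b) = interl s a b.
Proof.
move=> hi; rewrite /interl filter_map.
rewrite (@eq_filter _ _ (pp a b)); last by move=> z; rewrite /= !(inj_eq hi).
have -> : [:: h a; h b; h a; h b] = map h [:: a; b; a; b] by [].
have -> : [:: h b; h a; h b; h a] = map h [:: b; a; b; a] by [].
by rewrite !(inj_eq (inj_map hi)).
Qed.

Section Closed.
Variable T : finType.
Implicit Types (r : rel T) (C : {set T}).
Definition closed_by r C := forall a b, a \in C -> r a b -> b \in C.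

Lemma closed_conn r C x y : closed_by r C -> connect r x y -> x \in C -> y \in C.
Proof.
move=> H /connectP[p pth ->]; elim: p x pth => //= z p IH x /andP[rxz pth] xC.
exact: IH pth (H _ _ xC rxz).
Qed.

Lemma closedC r C : symmetric r -> closed_by r C -> closed_by r (~: C).
Proof.
move=> sr H a b; rewrite !inE => aC rab; apply/negP => bC.
by move: aC; rewrite (H b a bC) // sr.
Qed.

Lemma closed_cc r x : closed_by r [set z | connect r x z].
Proof. by move=> a b; rewrite !inE => xa rab; apply: connect_trans xa (connect1 rab). Qed.
End Closed.


Lemma good_iso (T1 T2 : finType) (h : T1 -> T2) (g : T2 -> T1) (e : rel T2) :
  cancel h g -> cancel g h -> good_graph e -> good_graph [rel a b | e (h a) (h b)].
Proof.
move=> hK gK [n0 [sy ir] cu [w [dw iw]] nt].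
have hi := can_inj hK; have gi := can_inj gK.
have nbE a : nbhd [rel a b | e (h a) (h b)] a = [set g x | x in nbhd e (h a)].
  apply/setP => z; rewrite inE /=; apply/idP/imsetP => [ez|[t tA ->]].
    by exists (h z); rewrite ?hK // inE.
  by rewrite gK; rewrite inE in tA.
split.
- by rewrite (bij_eq_card (f := h)) //; exists g.
- by split => [a b|a] /=; [exact: sy|exact: ir].
- by move=> a; rewrite nbE card_imset // cu.
- exists (map g w); split.
    move=> x; rewrite count_map -(dw (h x)); apply: eq_count => z /=.
    by rewrite (can2_eq gK hK).
  move=> a b /=; rewrite iw (inj_eq hi) !interlacedE.
  by have := interl_map w (h a) (h b) gi; rewrite !hK => ->.
- have tw a b : twins [rel a b | e (h a) (h b)] a b -> twins e (h a) (h b).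
    rewrite /twins (inj_eq hi) => /andP[-> /eqP E] /=; apply/eqP/setP => z.
    move/setP: E => /(_ (g z)); rewrite !inE /= !gK.
    by rewrite !(can2_eq gK hK).
  move=> [a [b [c [d [t1 t2 dj]]]]]; apply: nt; exists (h a), (h b), (h c), (h d).
  split; [exact: tw|exact: tw|].
  by rewrite disj2E !(inj_eq hi) -disj2E.
Qed.

Section Sub.
Variables (T : finType) (f : rel T) (S : {set T}) (W : seq T).
Definition NS v := [set t in S | f v t].
Definition twinsS a b := (a != b) && (NS a :\ b == NS b :\ a).
Hypotheses (S0 : S != set0) (fsym : symmetric f) (firr : irreflexive f)
  (fcub : forall v, v \in S -> #|NS v| = 3)
  (Wcnt : forall z, z \in S -> count_mem z W = 2)
  (Wint : forall a b, a \in S -> b \in S -> f a b = (a != b) && interlaced W a b)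
  (Wtw : ~ (exists a b c d, [/\ [&& a \in S, b \in S, c \in S & d \in S],
             twinsS a b, twinsS c d & [disjoint [set a; b] & [set c; d]]])).

Local Notation sT := {x : T | x \in S}.
Definition es : rel sT := [rel a b | f (val a) (val b)].

Lemma nbE_sub (a : sT) : [set val x | x in nbhd es a] = NS (val a).
Proof.
apply/setP => t; apply/imsetP/idP => [[z zN ->]|].
  by rewrite inE (valP z); rewrite inE in zN.
rewrite inE => /andP[tS ft]; exists (exist _ t tS) => //.
by rewrite inE /=.
Qed.

Lemma good_sub : good_graph es.
Proof.
split.
- rewrite card_sig; case/set0Pn: S0 => x xS; apply/card_gt0P; by exists x.
- by split => [a b|a] /=; [exact: fsym|exact: firr].
- by move=> a; rewrite -(card_imset _ val_inj) nbE_sub fcub // (valP a).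
- exists (pmap insub W); split.
    move=> x; rewrite -(Wcnt (valP x)).
    have -> : count_mem x (pmap insub W) = count_mem (val x) (map (fun z : sT => val z) (pmap insub W)).
      by rewrite count_map; apply: eq_count => z /=; rewrite val_eqE.
    rewrite (pmap_filter (@insubK _ _ sT)) count_filter; apply: eq_count => z /=.
    rewrite isSome_insub; case: eqP => // ->; by rewrite (valP x).
  move=> a b; rewrite /es /= Wint ?(valP a) ?(valP b) // val_eqE !interlacedE.
  rewrite -(interl_map _ _ _ val_inj) (pmap_filter (@insubK _ _ sT)).
  rewrite (eq_filter (isSome_insub sT)) interl_sub //; [exact: (valP a)|exact: (valP b)].
- have tw a b : twins es a b -> twinsS (val a) (val b).
    rewrite /twins /twinsS val_eqE => /andP[-> /eqP E] /=.
    rewrite -!nbE_sub; apply/eqP/setP => z; rewrite !inE.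
    apply/idP/idP => /andP[zb /imsetP[t tN zt]]; subst z.
      have zb' : t != b by apply: contra zb => /eqP->.
      have : t \in nbhd es b :\ a by rewrite -E in_setD1 zb' tN.
      rewrite in_setD1 => /andP[ta tb]; rewrite imset_f // andbT.
      by apply: contra ta => /eqP/val_inj->.
    have zb' : t != a by apply: contra zb => /eqP->.
    have : t \in nbhd es a :\ b by rewrite E in_setD1 zb' tN.
    rewrite in_setD1 => /andP[ta tb]; rewrite imset_f // andbT.
    by apply: contra ta => /eqP/val_inj->.
  move=> [a [b [c [d [t1 t2 dj]]]]]; apply: Wtw; exists (val a), (val b), (val c), (val d).
  split; [by rewrite (valP a) (valP b) (valP c) (valP d)|exact: tw|exact: tw|].
  by rewrite disj2E !val_eqE -disj2E.
Qed.

Lemma reduce : exists n (e' : rel 'I_n), good_graph e' /\ n = #|S|.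
Proof.
exists #|{: sT}|, [rel i j | es (enum_val i) (enum_val j)]; split.
  exact: good_iso enum_valK enum_rankK good_sub.
by rewrite card_sig.
Qed.
End Sub.


Record Setting (T : finType) (e : rel T) (u v x y : T) (L R : {set T}) : Prop := {
  s_sym : symmetric e; s_irr : irreflexive e; s_cub : cubic e;
  s_uL : u \in L; s_yR : y \in R; s_vL : v \notin L; s_vR : v \notin R;
  s_xL : x \notin L; s_xR : x \notin R;
  s_LR : forall z, z \in L -> z \notin R; s_euv : e u v; s_eyx : e y x;
  s_pL : forall z t, z \in L -> e z t -> t \in L \/ (z = u /\ t = v);
  s_pR : forall z t, z \in R -> e z t -> t \in R \/ (z = y /\ t = x) }.

Lemma setting_swap T e u v x y L R : @Setting T e u v x y L R -> Setting e y x v u R L.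
Proof.
case=> sy ir cu uL yR vL vR xL xR LR euv eyx pL pR; split => //.
move=> z zR; apply/negP => zL; by have := LR _ zL; rewrite zR.
Qed.

Section GP1.
Variables (T : finType) (e : rel T).
Definition fa (u y : T) : rel T := [rel a b | [|| e a b, (a == u) && (b == y) | (a == y) && (b == u)]].

Lemma fa_swap u y : fa y u =2 fa u y.
Proof. by move=> a b; rewrite /fa /= [X in _ || X]orbC. Qed.

Lemma NS_swap u y L R z : NS (fa y u) (R :|: L) z = NS (fa u y) (L :|: R) z.
Proof. by apply/setP => t; rewrite !inE fa_swap orbC. Qed.

Lemma twinsS_swap u y L R a b :
  twinsS (fa y u) (R :|: L) a b = twinsS (fa u y) (L :|: R) a b.
Proof. by rewrite /twinsS !(NS_swap u y L R). Qed.

Lemma twinsS_sym (f : rel T) (S : {set T}) (a b : T) : twinsS f S a b = twinsS f S b a.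
Proof. by rewrite /twinsS eq_sym; congr (_ && _); rewrite eq_sym. Qed.

Variables (u v x y : T) (L R : {set T}).
Hypothesis H : Setting e u v x y L R.
Local Notation S := (L :|: R).

Lemma uy : u != y.
Proof. by apply/eqP => E; have := s_LR H (s_uL H); rewrite E (s_yR H). Qed.

Lemma port_f z t : z \in L -> t \in S -> fa u y z t -> t \in L \/ (z = u /\ t = y).
Proof.
move=> zL tS /or3P[ezt|/andP[/eqP-> /eqP->]|/andP[/eqP zy _]]; last 2 first.
- by right.
- by have := s_LR H zL; rewrite zy (s_yR H).
case: (s_pL H zL ezt) => [|[_ tv]]; first by left.
by move: tS; rewrite tv inE (negbTE (s_vL H)) (negbTE (s_vR H)).
Qed.

Lemma exl : exists2 l, e u l & l != v.
Proof.
have := s_cub H u; rewrite (cardsD1 v) inE (s_euv H) add1n => -[] H2.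
have /card_gt0P[l] : 0 < #|nbhd e u :\ v| by rewrite H2.
rewrite !inE => /andP[lv lu].
by exists l.
Qed.

Lemma NS_u : NS (fa u y) S u = y |: (nbhd e u :\ v).
Proof.
apply/setP => t; rewrite !inE /fa /= eqxx /= (negbTE uy) /= orbF.
case: (eqVneq t y) => [->|ty]; first by rewrite (s_yR H) !orbT.
rewrite orbF /=; case eut: (e u t); rewrite ?andbF //= andbT.
case: (s_pL H (s_uL H) eut) => [tL|[_ tv]].
  by rewrite tL andbT; apply/esym/eqP => tv; move: (s_vL H); rewrite -tv tL.
by rewrite tv (negbTE (s_vL H)) (negbTE (s_vR H)) eqxx.
Qed.

Lemma NS_L z : z \in L -> z != u -> NS (fa u y) S z = nbhd e z.
Proof.
move=> zL zu; apply/setP => t; rewrite !inE /fa /= (negbTE zu) /=.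
have zy : (z == y) = false by apply/negbTE/eqP => E; have := s_LR H zL; rewrite E (s_yR H).
rewrite zy orbF; case ezt: (e z t); rewrite ?andbF // andbT.
by case: (s_pL H zL ezt) => [->|[zu' _]] //; move: zu; rewrite zu' eqxx.
Qed.

Lemma cub_L z : z \in L -> #|NS (fa u y) S z| = 3.
Proof.
move=> zL; case: (eqVneq z u) => [->|zu]; last by rewrite NS_L // (s_cub H).
rewrite NS_u cardsU1.
have -> : y \in nbhd e u :\ v = false.
  rewrite !inE; apply/negbTE/negP => /andP[yv euy].
  case: (s_pL H (s_uL H) euy) => [yL|[_ yv']]; first by have := s_LR H yL; rewrite (s_yR H).
  by move: yv; rewrite yv' eqxx.
have := s_cub H u; rewrite (cardsD1 v) inE (s_euv H) add1n => -[->].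
by [].
Qed.
End GP1.

Section GP2.
Variables (T : finType) (e : rel T) (u v x y : T) (L R : {set T}).
Hypothesis H : Setting e u v x y L R.
Local Notation S := (L :|: R).
Let H' := setting_swap H.

Lemma tw_u b : b \in S -> twinsS (fa e u y) S u b -> False.
Proof.
move=> bS /andP[ub /eqP E].
have [l el lv] := exl H.
have lL : l \in L by case: (s_pL H (s_uL H) el) => // -[_ lv']; move: lv; rewrite lv' eqxx.
have NSu := NS_u H.
case bL: (b \in L).
  have : y \in NS (fa e u y) S u :\ b.
    rewrite in_setD1 NSu setU11 andbT; apply/eqP => yb.
    by move: bL; rewrite -yb => yL; have := s_LR H yL; rewrite (s_yR H).
  rewrite E in_setD1 => /andP[_]; rewrite inE => /andP[yS fby].
  case: (port_f H bL yS fby) => [yL|[bu _]].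
    by have := s_LR H yL; rewrite (s_yR H).
  by move: ub; rewrite bu eqxx.
have bR : b \in R by rewrite inE bL in bS.
have : l \in NS (fa e u y) S u :\ b.
  rewrite in_setD1 NSu !inE el lv /= orbT andbT.
  by apply/eqP => lb; move: bL; rewrite -lb lL.
rewrite E in_setD1 => /andP[_]; rewrite inE => /andP[lS fbl].
have lS' : l \in R :|: L by rewrite setUC.
have fbl' : fa e y u b l by rewrite fa_swap.
case: (port_f H' bR lS' fbl') => [lR|[_ lu]].
  by have := s_LR H lL; rewrite lR.
by move: el; rewrite lu (s_irr H).
Qed.

Lemma NS_S z : z \in S -> z != u -> z != y -> NS (fa e u y) S z = nbhd e z.
Proof.
rewrite inE => /orP[zL|zR] zu zy; first exact: (NS_L H).
by rewrite -(NS_swap e u y L R); apply: (NS_L H').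
Qed.

Lemma cub_S z : z \in S -> #|NS (fa e u y) S z| = 3.
Proof.
rewrite inE => /orP[zL|zR]; first exact: (cub_L H).
by rewrite -(NS_swap e u y L R); apply: (cub_L H').
Qed.

End GP2.

Section GP3.
Variables (T : finType) (e : rel T) (u v x y : T) (L R : {set T}).
Hypothesis H : Setting e u v x y L R.
Local Notation S := (L :|: R).
Let H' := setting_swap H.

Lemma tw_G a b : a \in S -> b \in S -> twinsS (fa e u y) S a b -> twins e a b.
Proof.
move=> aS bS.
have gen c d : c \in S -> d \in S -> twinsS (fa e u y) S c d -> (c != u) && (c != y).
  move=> cS dS Hcd; apply/andP; split; apply/eqP => E; subst c.
    exact: (tw_u H dS Hcd).
  rewrite -(twinsS_swap e u y L R) in Hcd.
  have dS' : d \in R :|: L by rewrite setUC.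
  exact: (tw_u H' dS' Hcd).
move=> Hab; have /andP[au ay] := gen _ _ aS bS Hab.
have Hba : twinsS (fa e u y) S b a by rewrite twinsS_sym.
have /andP[bu b_y] := gen b a bS aS Hba.
move: Hab; rewrite /twinsS /twins !(NS_S H) //.
Qed.
End GP3.


Section Words.
Variable T : eqType.
Implicit Types (s : seq T) (a b : T).

Lemma splitF s a : a \in s -> exists s1 s2, s = s1 ++ a :: s2 /\ a \notin s1.
Proof.
elim: s => //= z s IH; rewrite inE; case: eqP => [->|za] /= ain.
  by exists [::], s.
have [s1 [s2 [-> as1]]] := IH ain; exists (z :: s1), s2; split => //.
by rewrite inE negb_or as1 andbT; apply/eqP => E; apply: za.
Qed.

Lemma split2 s a : count_mem a s = 2 ->
  exists s1 s2 s3, s = s1 ++ a :: s2 ++ a :: s3 /\ [/\ a \notin s1, a \notin s2 & a \notin s3].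
Proof.
move=> c2; have ain : a \in s by rewrite -has_pred1 has_count c2.
have [s1 [t [E as1]]] := splitF ain; move: c2; rewrite E count_cat /= eqxx /=.
rewrite (count_memPn as1) add0n add1n => -[c1].
have ain' : a \in t by rewrite -has_pred1 has_count c1.
have [s2 [s3 [E' as2]]] := splitF ain'; move: c1; rewrite E' count_cat /= eqxx /=.
rewrite (count_memPn as2) add0n add1n => -[c0].
exists s1, s2, s3; split => //; split => //; exact/count_memPn.
Qed.

Lemma filter_nil (p : pred T) s : (forall z, z \in s -> ~~ p z) -> filter p s = [::].
Proof.
elim: s => //= z s IH H; rewrite (negbTE (H z (mem_head _ _))) IH // => t ts.
by apply: H; rewrite inE ts orbT.
Qed.

Lemma H1 a b s : b \notin s -> map (pred1 a) (filter (pp a b) s) = nseq (count_mem a s) true.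
Proof.
elim: s => //= z s IH; rewrite inE negb_or => /andP[bz bs].
rewrite [z == b]eq_sym (negbTE bz) orbF; by case: eqP => [->|_] /=; rewrite IH ?eqxx.
Qed.

Lemma H2 a b s : a != b -> a \notin s -> map (pred1 a) (filter (pp a b) s) = nseq (count_mem b s) false.
Proof.
move=> ab; elim: s => //= z s IH; rewrite inE negb_or => /andP[az as_].
rewrite [z == a]eq_sym (negbTE az) /=; case: eqP => [zb|_] /=; rewrite IH //.
by rewrite zb eq_sym (negbTE ab).
Qed.
End Words.

Fixpoint tf (l : seq bool) : bool :=
  match l with [::] => true | true :: l' => all id l' | false :: l' => tf l' end.
Fixpoint tft (l : seq bool) : bool :=
  match l with [::] => true | true :: l' => tft l' | false :: l' => tf l' end.

Lemma tft_ilv l : tft l -> ilv l = false.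
Proof. by move=> H; apply/negbTE/negP => /orP[]/eqP E; rewrite E in H. Qed.

Lemma tft_t i l : tft (nseq i true ++ l) = tft l.
Proof. by elim: i. Qed.

Lemma tf_f i l : tf (nseq i false ++ l) = tf l.
Proof. by elim: i. Qed.

Lemma tf_t i : tf (nseq i true).
Proof. by case: i => //= i; elim: i. Qed.

Lemma tf_tft l : tf l -> tft l.
Proof. by elim: l => // -[] l IH //=; elim: l {IH} => // -[]. Qed.

Section GW.
Variables (T : finType) (e : rel T) (u v x y : T) (L R : {set T}).
Hypothesis H : Setting e u v x y L R.
Variable w : seq T.
Hypotheses (dw : double_occurrence w) (iw : forall a b, e a b = (a != b) && interlaced w a b).
Local Notation S := (L :|: R).

Lemma cnt_filter (P : {set T}) z : count_mem z (filter (mem P) w) = if z \in P then 2 else 0.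
Proof.
rewrite count_filter; case: ifP => zP; [rewrite -(dw z)|rewrite -(count_pred0 w)];
  apply: eq_count => t /=; case: eqP => [->|] //=; by rewrite zP.
Qed.

Lemma fa_sym : symmetric (fa e u y).
Proof.
move=> a b; rewrite /fa /= (s_sym H) [X in _ || X]orbC.
by rewrite [(b == u) && _]andbC [(b == y) && _]andbC.
Qed.

Lemma word_GP : exists W : seq T, (forall z, z \in S -> count_mem z W = 2) /\
  (forall a b, a \in S -> b \in S -> fa e u y a b = (a != b) && interlaced W a b).
Proof.
set wL := filter (mem L) w; set wR := filter (mem R) w.
have cL : count_mem u wL = 2 by rewrite /wL cnt_filter (s_uL H).
have cR : count_mem y wR = 2 by rewrite /wR cnt_filter (s_yR H).
have [s1 [s2 [s3 [EL [u1 u2 u3]]]]] := split2 cL.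
have [r1 [r2 [r3 [ER [y1 y2 y3]]]]] := split2 cR.
have inL z : z \in wL -> z \in L by rewrite mem_filter => /andP[].
have inR z : z \in wR -> z \in R by rewrite mem_filter => /andP[].
have hs1 z : z \in s1 -> z \in L by move=> zs; apply: inL; rewrite EL !(mem_cat, inE) zs.
have hs2 z : z \in s2 -> z \in L by move=> zs; apply: inL; rewrite EL !(mem_cat, inE) zs !orbT.
have hs3 z : z \in s3 -> z \in L by move=> zs; apply: inL; rewrite EL !(mem_cat, inE) zs !orbT.
have hr1 z : z \in r1 -> z \in R by move=> zs; apply: inR; rewrite ER !(mem_cat, inE) zs.
have hr2 z : z \in r2 -> z \in R by move=> zs; apply: inR; rewrite ER !(mem_cat, inE) zs !orbT.
have hr3 z : z \in r3 -> z \in R by move=> zs; apply: inR; rewrite ER !(mem_cat, inE) zs !orbT.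
set W := [:: u] ++ s2 ++ [:: y; u] ++ r2 ++ [:: y] ++ (r3 ++ r1) ++ (s3 ++ s1).
exists W; split.
  move=> z zS.
  have : count_mem z wL + count_mem z wR = 2.
    rewrite /wL /wR !cnt_filter; case/setUP: zS => [zL|zR].
      by rewrite zL (negbTE (s_LR H zL)).
    have zL : z \notin L by apply/negP => zL; have := s_LR H zL; rewrite zR.
    by rewrite zR (negbTE zL).
  rewrite /W EL ER !count_cat /= !count_cat /=; lia.
move=> a b aS bS.
have uy := uy H.
case: (eqVneq a b) => [<-|ab].
  rewrite /fa /= (s_irr H) /=; case: (eqVneq a u) => [->|au]; first by rewrite (negbTE uy).
  by rewrite /= andbF.
rewrite /= interlacedE.
have LnR z : z \in L -> z \in R = false by move=> zL; apply/negbTE/(s_LR H).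
have RnL z : z \in R -> z \in L = false by move=> zR; apply/negbTE/negP => zL; rewrite LnR in zR.
have cross a' b' : a' \in L -> b' \in R -> fa e u y a' b' = interl W a' b'.
  move=> aL bR.
  have ab' : a' != b' by apply/eqP => E; move: aL; rewrite E RnL.
  have ub : (u == b') = false by apply/negbTE/eqP => E; move: bR; rewrite -E LnR // (s_uL H).
  have ya : (y == a') = false by apply/negbTE/eqP => E; move: aL; rewrite -E RnL // (s_yR H).
  have eab : e a' b' = false.
    apply/negbTE/negP => eab; case: (s_pL H aL eab) => [bL|[_ bv]]; first by rewrite RnL in bL.
    by move: bR; rewrite bv (negbTE (s_vR H)).
  have -> : fa e u y a' b' = (a' == u) && (b' == y).
    by rewrite /fa /= eab [a' == y]eq_sym ya /= orbF.
  have nb (s0 : seq T) : (forall z, z \in s0 -> z \in L) -> b' \notin s0.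
    by move=> Hs; apply/negP => /Hs; rewrite RnL.
  have na (s0 : seq T) : (forall z, z \in s0 -> z \in R) -> a' \notin s0.
    by move=> Hs; apply/negP => /Hs; rewrite LnR.
  have h31 z : z \in r3 ++ r1 -> z \in R by rewrite mem_cat => /orP[/hr3|/hr1].
  have h31' z : z \in s3 ++ s1 -> z \in L by rewrite mem_cat => /orP[/hs3|/hs1].
  rewrite interl_ilv // /W !filter_cat !map_cat.
  rewrite (H1 _ (nb _ hs2)) (H1 _ (nb _ hs3)) (H1 _ (nb _ hs1)).
  rewrite (H2 ab' (na _ hr2)) (H2 ab' (na _ hr3)) (H2 ab' (na _ hr1)) /=.
  rewrite ub ya /=.
  case: (eqVneq a' u) => [au|au].
    subst a'; rewrite (count_memPn u2) (count_memPn u3) (count_memPn u1) /=.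
    case: (eqVneq b' y) => [by_|by_].
      by subst b'; rewrite (count_memPn y2) (count_memPn y3) (count_memPn y1) /= eqxx [y == u]eq_sym (negbTE uy).
    by rewrite /= eqxx.
  rewrite /=; symmetry; apply: tft_ilv; rewrite tft_t; apply: tf_tft.
  by case: (y == b'); rewrite /= ?ya /= ?tf_f /= ?ya /= -?catA ?tf_f -?nseqD ?tf_t.
case/setUP: aS => [aL|aR]; case/setUP: bS => [bL|bR].
- have ya : (y == a) = false by apply/negbTE/eqP => E; rewrite -E RnL // in aL; exact: (s_yR H).
  have yb : (y == b) = false by apply/negbTE/eqP => E; rewrite -E RnL // in bL; exact: (s_yR H).
  have fe : fa e u y a b = e a b by rewrite ![y == _]eq_sym in ya yb; rewrite /fa /= ya yb !andbF !orbF.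
  rewrite fe iw ab /= interlacedE -(@interl_sub _ (mem L) w a b aL bL) -/wL EL.
  rewrite interl_rot //; apply: interl_feq.
  have nr r : (forall z, z \in r -> z \in R) -> filter (pp a b) r = [::].
    move=> Hr; apply: filter_nil => z /Hr zR /=; apply/negP => /orP[]/eqP E; subst z.
      by rewrite RnL in aL.
    by rewrite RnL in bL.
  rewrite /W; do 4 rewrite /= ?filter_cat.
  rewrite (nr r2 hr2) (nr r3 hr3) (nr r1 hr1) /= ya yb /=.
  by case: (_ || _); rewrite /= -!catA.
- exact: cross.
- by rewrite fa_sym interl_sym; apply: cross.
- have ua : (u == a) = false by apply/negbTE/eqP => E; rewrite -E LnR // in aR; exact: (s_uL H).
  have ub : (u == b) = false by apply/negbTE/eqP => E; rewrite -E LnR // in bR; exact: (s_uL H).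
  have fe : fa e u y a b = e a b.
    by rewrite ![u == _]eq_sym in ua ub; rewrite /fa /= ua ub !andbF !orbF.
  rewrite fe iw ab /= interlacedE -(@interl_sub _ (mem R) w a b aR bR) -/wR ER.
  rewrite interl_rot //; apply: interl_feq.
  have nl (r : seq T) : (forall z, z \in r -> z \in L) -> filter (pp a b) r = [::].
    move=> Hr; apply: filter_nil => z /Hr zL /=; apply/negP => /orP[]/eqP E; subst z.
      by rewrite LnR in aR.
    by rewrite LnR in bR.
  rewrite /W; do 4 rewrite /= ?filter_cat.
  rewrite (nl s2 hs2) (nl s3 hs3) (nl s1 hs1) /= ua ub /=.
  by case: (_ || _); rewrite /= -!catA ?cats0.
Qed.
End GW.


Section Main.
Variables (T : finType) (e : rel T) (w : seq T).
Hypotheses (esym : symmetric e) (eirr : irreflexive e) (ecub : cubic e)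
  (dw : double_occurrence w) (iw : forall a b, e a b = (a != b) && interlaced w a b)
  (nt : ~ two_disjoint_twin_pairs e)
  (Hmin : forall (n : nat) (e' : rel 'I_n), good_graph e' -> #|T| <= n).

Lemma small (f : rel T) (S : {set T}) (W : seq T) :
  S != set0 -> symmetric f -> irreflexive f ->
  (forall v, v \in S -> #|NS f S v| = 3) ->
  (forall z, z \in S -> count_mem z W = 2) ->
  (forall a b, a \in S -> b \in S -> f a b = (a != b) && interlaced W a b) ->
  (forall a b, a \in S -> b \in S -> twinsS f S a b -> twins e a b) ->
  #|T| <= #|S|.
Proof.
move=> S0 fs fi fc Wc Wi tw.
have Wtw : ~ (exists a b c d, [/\ [&& a \in S, b \in S, c \in S & d \in S],
             twinsS f S a b, twinsS f S c d & [disjoint [set a; b] & [set c; d]]]).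
  move=> [a [b [c [d [/and4P[aS bS cS dS] t1 t2 dj]]]]]; apply: nt.
  by exists a, b, c, d; split => //; apply: tw.
have [n [e' [g En]]] := reduce S0 fs fi fc Wc Wi Wtw.
rewrite -En.
exact: Hmin g.
Qed.

Lemma card_lt (S : {set T}) z : z \notin S -> #|S| < #|T|.
Proof.
move=> zS; rewrite -cardsT; apply: proper_card; rewrite properT.
by apply: contraNneq zS => ->; rewrite inE.
Qed.

Lemma fa_irr u v x y L R : Setting e u v x y L R -> irreflexive (fa e u y).
Proof.
move=> H a; rewrite /fa /= eirr /=; case: (eqVneq a u) => [->|au] /=.
  by rewrite ?eqxx (negbTE (uy H)).
by rewrite andbF.
Qed.

Lemma GP_false u v x y L R : Setting e u v x y L R -> False.
Proof.
move=> H; have [W [Wc Wi]] := word_GP H dw iw.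
have : #|T| <= #|L :|: R|.
  apply: (small (f := fa e u y) (W := W)) => //.
  - by apply/set0Pn; exists u; rewrite inE (s_uL H).
  - exact: fa_sym H.
  - exact: fa_irr H.
  - exact: cub_S H.
  - exact: tw_G H.
have : #|L :|: R| < #|T|.
  by apply: (card_lt (z := v)); rewrite inE negb_or (s_vL H) (s_vR H).
by move=> a b; have := leq_trans a b; rewrite ltnn.
Qed.

Lemma connected x y : connect e x y.
Proof.
case: (boolP (connect e x y)) => // nxy; exfalso.
set S := [set z | connect e x z].
have cl : closed_by e S := @closed_cc _ e x.
have NSe z : z \in S -> NS e S z = nbhd e z.
  move=> zS; apply/setP => t; rewrite /NS !inE; case ezt: (e z t); rewrite ?andbF ?andbT //.
  by have := cl z t zS ezt; rewrite inE.
have S0 : S != set0 by apply/set0Pn; exists x; rewrite inE connect0.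
have fc v : v \in S -> #|NS e S v| = 3 by move=> vS; rewrite NSe.
have Wc z : z \in S -> count_mem z w = 2 by move=> _; exact: dw.
have Wi a b : a \in S -> b \in S -> e a b = (a != b) && interlaced w a b by move=> _ _; exact: iw.
have tw a b : a \in S -> b \in S -> twinsS e S a b -> twins e a b.
  by move=> aS bS; rewrite /twinsS /twins !NSe.
have := small S0 esym eirr fc Wc Wi tw.
have : #|S| < #|T| by apply: (card_lt (z := y)); rewrite inE.
by move=> a b; have := leq_trans a b; rewrite ltnn.
Qed.

Lemma delv_sym v : symmetric (delv e v).
Proof. by move=> a b; rewrite /delv /= esym; case: (a != v); case: (b != v); rewrite ?andbF ?andbT. Qed.

Definition dd u v : rel T :=
  [rel a b | [&& e a b, ~~ ((a == u) && (b == v)) & ~~ ((a == v) && (b == u))]].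

Lemma dd_sym u v : symmetric (dd u v).
Proof.
move=> a b; rewrite /dd /= esym.
by case: (e b a); case: (a == u); case: (a == v); case: (b == u); case: (b == v).
Qed.

Lemma ddC u v : dd u v =2 dd v u.
Proof.
move=> a b; rewrite /dd /=.
by case: (e a b); case: (a == u); case: (a == v); case: (b == u); case: (b == v).
Qed.

Definition bridge u v := e u v && ~~ connect (dd u v) u v.

Lemma bridgeC u v : bridge u v -> bridge v u.
Proof.
case/andP=> euv nc; rewrite /bridge esym euv /= (eq_connect (ddC v u)).
by rewrite (sym_connect_sym (dd_sym u v)).
Qed.

Lemma ex_other u v : e u v -> exists2 a, e u a & a != v.
Proof.
move=> euv; have := ecub u; rewrite (cardsD1 v) inE euv add1n => -[] H2.
have /card_gt0P[l] : 0 < #|nbhd e u :\ v| by rewrite H2.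
by rewrite !inE => /andP[lv lu]; exists l.
Qed.

Lemma bridge_cut u v : bridge u v -> cutpoint e u.
Proof.
case/andP=> euv nc; have [a ea av] := ex_other euv.
have vu : v != u by apply/eqP => E; move: euv; rewrite E eirr.
have au : a != u by apply/eqP => E; move: ea; rewrite E eirr.
apply/existsP; exists v; apply/existsP; exists a; rewrite vu au connected /=.
set C := [set z | connect (dd u v) u z].
have cl : closed_by (delv e u) C.
  move=> a' b'; rewrite !inE => ca /and3P[eab a'u b'u].
  apply: connect_trans ca (connect1 _); rewrite /dd /= eab.
  by rewrite (negbTE a'u) (negbTE b'u) /= andbF.
apply/negP => H.
have cs := sym_connect_sym (delv_sym u).
have aC : a \in C by rewrite inE connect1 // /dd /= ea eqxx /= (negbTE av) /= eq_sym (negbTE vu).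
have H' : connect (delv e u) a v by rewrite cs.
by have := closed_conn cl H' aC; rewrite inE (negbTE nc).
Qed.

Lemma cut_bridge w0 : cutpoint e w0 -> exists n, bridge w0 n.
Proof.
case/existsP=> x /existsP[y /and4P[xw yw _ nxy]].
set D := delv e w0.
have cs := sym_connect_sym (delv_sym w0).
set K := fun z => [set t | connect D z t].
have Kw z : z != w0 -> w0 \notin K z.
  move=> zw; apply/negP => H.
  have cl : closed_by D [set t | t != w0] by move=> a b _ /and3P[_ _]; rewrite inE.
  rewrite inE in H; by have := closed_conn cl H; rewrite !inE eqxx => /(_ zw).
have hasN z : z != w0 -> exists2 n, e w0 n & n \in K z.
  move=> zw; case: (boolP [exists n, e w0 n && (n \in K z)]) => [/existsP[n /andP[]]|H].
    by exists n.
  exfalso; have cl : closed_by e (K z).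
    move=> a b aK eab; case: (eqVneq b w0) => [bw|bw].
      by move: H; rewrite negb_exists => /forallP/(_ a); rewrite esym -bw eab aK.
    have aw : a != w0 by apply: contraNneq (Kw z zw) => <-.
    by apply: (@closed_cc _ D z a b aK); rewrite /D /delv /= eab aw bw.
  have := closed_conn cl (connected z w0); rewrite inE connect0 => /(_ isT).
  by rewrite (negbTE (Kw z zw)).
have [n1 e1 n1x] := hasN x xw; have [n2 e2 n2y] := hasN y yw.
have Kdisj t : t \in K x -> t \in K y -> False.
  rewrite !inE => xt yt; move: nxy; rewrite (connect_trans xt) //.
  by rewrite cs.
have [n [en Hn]] : exists n, e w0 n /\ forall m, e w0 m -> m \in K n -> m = n.
  case: (boolP [exists n, e w0 n && [forall m, (e w0 m && (m \in K n)) ==> (m == n)]]).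
    case/existsP=> n /andP[en /forallP Hn]; exists n; split=> // m em mK.
    by have := Hn m; rewrite em mK => /eqP.
  rewrite negb_exists => /forallP H; exfalso.
  have H' m0 : e w0 m0 -> exists m, [&& e w0 m, m \in K m0 & m != m0].
    move=> em0; move: (H m0); rewrite em0 /= negb_forall => /existsP[m].
    by rewrite negb_imply -andbA => Hm; exists m.
  have [m1 /and3P[em1 m1K m1n]] := H' n1 e1.
  have [m2 /and3P[em2 m2K m2n]] := H' n2 e2.
  have m1x : m1 \in K x.
    by move: n1x m1K; rewrite /K !inE; exact: connect_trans.
  have m2y : m2 \in K y.
    by move: n2y m2K; rewrite /K !inE; exact: connect_trans.
  set A := [set n1; m1]; set B := [set n2; m2].
  have AK t : t \in A -> t \in K x by move=> /set2P[]->.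
  have BK t : t \in B -> t \in K y by move=> /set2P[]->.
  have AB : A :&: B = set0.
    by apply/setP => t; rewrite inE in_set0; apply/negP => /andP[/AK ? /BK ?]; apply: (Kdisj t).
  have sub : A :|: B \subset nbhd e w0.
    by apply/subsetP => t; rewrite !inE => /orP[]/orP[]/eqP->.
  have := subset_leq_card sub; rewrite ecub cardsU AB cards0 subn0 !cards2.
  by rewrite eq_sym m1n eq_sym m2n.
exists n; rewrite /bridge en /=; apply/negP => H.
have nw : n != w0 by apply/eqP => E; move: en; rewrite E eirr.
have cl : closed_by (dd w0 n) (K n).
  move=> a b aK /and3P[eab c1 c2].
  have aw : a != w0 by apply: contraNneq (Kw n nw) => <-.
  case: (eqVneq b w0) => [bw|bw].
    have an : a = n by apply: Hn => //; rewrite esym -bw.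
    by move: c2; rewrite an bw !eqxx.
  by apply: (@closed_cc _ D n a b aK); rewrite /D /delv /= eab aw bw.
have Hc := closed_conn (closedC (dd_sym w0 n) cl) H.
have : n \in ~: K n by apply: Hc; rewrite inE (Kw n nw).
by rewrite !inE connect0.
Qed.

Definition sd u v := [set z | connect (dd u v) u z].

Lemma sd_port u v z t : v \notin sd u v -> z \in sd u v -> e z t ->
  t \in sd u v \/ (z = u /\ t = v).
Proof.
move=> vn zs ezt; case: (boolP ((z == u) && (t == v))) => [/andP[/eqP-> /eqP->]|H]; first by right.
left; apply: (@closed_cc _ (dd u v) u z t zs); rewrite /dd /= ezt H /=.
by apply/negP => /andP[/eqP zv _]; move: zs; rewrite zv (negbTE vn).
Qed.

Lemma edge_dd u v c d : e c d -> [set u; v] != [set c; d] -> dd u v c d.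
Proof.
move=> ecd ne; rewrite /dd /= ecd /=; apply/andP; split; apply/negP => /andP[/eqP E1 /eqP E2].
  by move: ne; rewrite E1 E2 eqxx.
by move: ne; rewrite E1 E2 setUC eqxx.
Qed.

Lemma sd_edge u v c d : e c d -> [set u; v] != [set c; d] -> (c \in sd u v) = (d \in sd u v).
Proof.
move=> ecd ne; have H1 := edge_dd ecd ne.
have H2 : dd u v d c by rewrite dd_sym.
apply/idP/idP => H; [exact: (@closed_cc _ (dd u v) u c d H H1)|exact: (@closed_cc _ (dd u v) u d c H H2)].
Qed.

Lemma sd_disj u v z : bridge u v -> z \in sd u v -> z \in sd v u -> False.
Proof.
case/andP=> _ nc; rewrite !inE => H1 H2; move: nc.
rewrite (connect_trans H1) //.
rewrite (sym_connect_sym (dd_sym u v)) (eq_connect (ddC u v)); exact: H2.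
Qed.

Lemma core u v x y : bridge u v -> bridge x y -> x \notin sd u v -> y \notin sd u v ->
  u \notin sd y x -> v \notin sd y x -> False.
Proof.
move=> b1 b2 xL yL uR vR.
have vL : v \notin sd u v by case/andP: b1 => _; rewrite inE.
have xR : x \notin sd y x by case/andP: (bridgeC b2) => _; rewrite inE.
apply: (@GP_false u v x y (sd u v) (sd y x)); split => //.
- by rewrite inE connect0.
- by rewrite inE connect0.
- move=> z zL.
  set C := [set t | (t \notin sd u v) || (t \notin sd y x)].
  have cl : closed_by (dd u v) C.
    move=> a b; rewrite inE => /orP[aL|aR] dab; rewrite inE.
      apply/orP; left; apply: contra aL => bL.
      by apply: (@closed_cc _ (dd u v) u b a bL); rewrite dd_sym.
    case bL: (b \in sd u v); last by [].
    have aL : a \in sd u v by apply: (@closed_cc _ (dd u v) u b a bL); rewrite dd_sym.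
    apply/negP => bR; move: aR; rewrite (@closed_cc _ (dd y x) y b a bR) //.
    case/and3P: dab => eab _ _; rewrite /dd /= esym eab /=.
    apply/andP; split; apply/negP => /andP[/eqP E1 /eqP E2].
      by move: xL; rewrite -E2 aL.
    by move: yL; rewrite -E2 aL.
  have uC : u \in C by rewrite inE uR orbT.
  have := closed_conn cl (_ : connect (dd u v) u z) uC.
  rewrite inE in zL; move=> /(_ zL); rewrite inE.
  by rewrite inE zL.
- by case/andP: b1.
- by case/andP: b2; rewrite esym.
- by move=> z t; apply: sd_port.
- by move=> z t; apply: sd_port.
Qed.

Lemma bridges_eq u v x y : bridge u v -> bridge x y -> [set u; v] = [set x; y].
Proof.
have core' a b c d : bridge a b -> bridge c d -> [set a; b] != [set c; d] -> c \notin sd a b -> False.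
  move=> b1 b2 ne cL.
  have ecd : e c d by case/andP: b2.
  have eab : e a b by case/andP: b1.
  have dL : d \notin sd a b by rewrite -(sd_edge ecd ne).
  have ne' : [set c; d] != [set a; b] by rewrite eq_sym.
  case aR: (a \in sd d c).
    have aR' : a \notin sd c d by apply/negP => H; exact: (sd_disj b2 H aR).
    have ne'' : [set d; c] != [set a; b] by rewrite setUC.
    have bR' : b \notin sd c d by rewrite -(sd_edge eab ne').
    apply: (core b1 (bridgeC b2)) => //.
  have ne'' : [set d; c] != [set a; b] by rewrite setUC.
  have bR : b \notin sd d c by rewrite -(sd_edge eab ne'') aR.
  by apply: (core b1 b2) => //; rewrite aR.
move=> b1 b2; apply/eqP; apply/negPn/negP => ne.
case xL: (x \in sd u v); last by apply: (core' u v x y) => //; rewrite xL.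
have xL' : x \notin sd v u by apply/negP => H; exact: (sd_disj b1 xL H).
by apply: (core' v u x y (bridgeC b1) b2) => //; rewrite setUC.
Qed.
End Main.


Theorem proposition8 (T : finType) (e : rel T)
  (HG : good_graph e)
  (Hmin : forall (n : nat) (e' : rel 'I_n), good_graph e' -> #|T| <= n)
  (Hnot2 : ~ two_connected e) :
  #|[set v | cutpoint e v]| = 2.
Proof.
case: HG => n0 [esym eirr] ecub [w [dw iw]] nt.
have conn x y : connect e x y := connected esym eirr ecub dw iw nt Hmin x y.
have T4 : 2 < #|T|.
  case/card_gt0P: n0 => x0 _.
  have : #|x0 |: nbhd e x0| <= #|T| by rewrite -cardsT; apply: subset_leq_card; apply: subsetT.
  by rewrite cardsU1 ecub inE eirr /=; apply: leq_trans.
have [c0 cc0] : exists c, cutpoint e c.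
  case: (boolP [forall v, [forall x, [forall y, (x != v) ==> (y != v) ==> connect (delv e v) x y]]]) => H.
    exfalso; apply: Hnot2; split => // v x y xv yv.
    by move/forallP: H => /(_ v)/forallP/(_ x)/forallP/(_ y); rewrite xv yv.
  move: H; rewrite negb_forall => /existsP[v]; rewrite negb_forall => /existsP[x].
  rewrite negb_forall => /existsP[y]; rewrite !negb_imply => /and3P[xv yv nc].
  by exists v; apply/existsP; exists x; apply/existsP; exists y; rewrite xv yv conn nc.
have [n bn] := cut_bridge esym eirr ecub dw iw nt Hmin cc0.
have -> : [set v | cutpoint e v] = [set c0; n].
  apply/setP => z; rewrite inE; apply/idP/idP.
    move=> cz; have [m bm] := cut_bridge esym eirr ecub dw iw nt Hmin cz.
    by rewrite -(bridges_eq esym eirr ecub dw iw nt Hmin bm bn) set21.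
  case/set2P => ->; first exact: (bridge_cut esym eirr ecub dw iw nt Hmin bn).
  exact: (bridge_cut esym eirr ecub dw iw nt Hmin (bridgeC esym bn)).
rewrite cards2; case/andP: bn => en _.
by have -> : c0 != n by apply/eqP => E; move: en; rewrite E eirr.
Qed.
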